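(* Let $(H_q)_{q\ge0}$ be the Hermite polynomials, fix $u\in\mathbb R$ and $\gamma\in\mathbb R$. Then $$\sum_{q=1}^\infty \frac{H_q(u)^2}{q!\,q^{\gamma}}<\infty\quad\Longleftrightarrow\quad\gamma>\tfrac12.$$
   Context: Hermite polynomials are defined by $H_0(x)=1$, $H_1(x)=x$, $H_{q+1}(x)=xH_q(x)-qH_{q-1}(x)$. *)

(* Defs.v *)
From Stdlib Require Import Reals.
From Coquelicot Require Import Coquelicot.
Open Scope R_scope.

(* Hermite polynomials (probabilists'): H_0 = 1, H_1 = x,
   H_{q+1}(x) = x H_q(x) - q H_{q-1}(x). *)
Fixpoint hermite (n : nat) (x : R) : R :=
  match n with
  | O => 1
  | S m =>
      match m with
      | O => x
      | S k => x * hermite m x - INR m * hermite k x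
      end
  end.

(* Main.v *)
Require Import Defs.
From Stdlib Require Import Reals Lra Lia Psatz.
From Coquelicot Require Import Coquelicot.
Open Scope R_scope.

Definition ha (u : R) (k : nat) : R := hermite k u ^ 2 / INR (Factorial.fact k).
Definition HA (u : R) (m : nat) : R := sum_f_R0 (ha u) m.

Lemma herm_rec u k : hermite (S (S k)) u = u * hermite (S k) u - INR (S k) * hermite k u.
Proof. reflexivity. Qed.

Lemma fact_S k : Factorial.fact (S k) = (S k * Factorial.fact k)%nat.
Proof. reflexivity. Qed.

Lemma fact_pos k : 0 < INR (Factorial.fact k).
Proof. apply lt_0_INR, Factorial.lt_O_fact. Qed.

Lemma ha_nonneg u k : 0 <= ha u k.
Proof. unfold ha. apply Rdiv_le_0_compat; [nra | apply fact_pos]. Qed.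

Lemma HA_S u m : HA u (S m) = HA u m + ha u (S m).
Proof. reflexivity. Qed.

Lemma HA_ge1 u m : 1 <= HA u m.
Proof.
  induction m.
  - unfold HA, ha; simpl; lra.
  - rewrite HA_S; pose proof (ha_nonneg u (S m)); lra.
Qed.

Lemma HA_mono u m : HA u m <= HA u (S m).
Proof. rewrite HA_S; pose proof (ha_nonneg u (S m)); lra. Qed.

Lemma turan u m :
  hermite (S m) u ^ 2 - hermite m u * hermite (S (S m)) u = INR (Factorial.fact m) * HA u m.
Proof.
  induction m.
  - unfold HA, ha; simpl; field.
  - rewrite HA_S. unfold ha.
    rewrite Rmult_plus_distr_l.
    replace (INR (Factorial.fact (S m)) * (hermite (S m) u ^ 2 / INR (Factorial.fact (S m))))
      with (hermite (S m) u ^ 2) by (field; apply Rgt_not_eq, fact_pos).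
    rewrite fact_S, mult_INR.
    replace (INR (S m) * INR (Factorial.fact m) * HA u m) with (INR (S m) * (INR (Factorial.fact m) * HA u m)) by ring.
    rewrite <- IHm.
    rewrite (herm_rec u (S m)), (herm_rec u m).
    rewrite (S_INR (S m)). ring.
Qed.

Lemma key u m :
  let N := INR (S m) in let s := ha u m + ha u (S m) in
  (N * s - HA u m) ^ 2 <= (u ^ 2 / 4) * N * s ^ 2.
Proof.
  intros N s.
  pose proof (turan u m) as T.
  rewrite herm_rec in T.
  set (F := INR (Factorial.fact m)) in *.
  assert (HF : 0 < F) by apply fact_pos.
  assert (HN : 0 < N) by (apply lt_0_INR; lia).
  set (h0 := hermite m u) in *. set (h1 := hermite (S m) u) in *.
  assert (E1 : ha u m = h0 ^ 2 / F) by reflexivity.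
  assert (E2 : ha u (S m) = h1 ^ 2 / (N * F)).
  { unfold ha. fold h1. rewrite fact_S, mult_INR. reflexivity. }
  assert (EA : HA u m = (h1 ^ 2 - u * h0 * h1 + N * h0 ^ 2) / F).
  { replace (HA u m) with (F * HA u m / F) by (field; lra). rewrite <- T. unfold N. field; lra. }
  set (X := h0 ^ 2 / F). set (Y := h1 ^ 2 / (N * F)).
  assert (D : N * s - HA u m = u * h0 * h1 / F).
  { unfold s. rewrite E1, E2, EA. field. lra. }
  rewrite D.
  assert (P : (u * h0 * h1 / F) ^ 2 = u ^ 2 * N * X * Y).
  { unfold X, Y. field. lra. }
  rewrite P.
  assert (Hs : s = X + Y) by (unfold s; rewrite E1, E2; reflexivity).
  rewrite Hs.
  clearbody X Y.
  assert (0 <= u ^ 2 * N * (X - Y) ^ 2).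
  { apply Rmult_le_pos; [apply Rmult_le_pos; [apply pow2_ge_0 | lra] | apply pow2_ge_0]. }
  lra.
Qed.

Lemma sq_bound d t : 0 <= t -> d ^ 2 <= t ^ 2 -> - t <= d <= t.
Proof. intros Ht H. split; nra. Qed.

Lemma key_bounds u m :
  let N := INR (S m) in let s := ha u m + ha u (S m) in
  let e := Rabs u / 2 in let x := sqrt N in
  (N - e * x) * s <= HA u m <= (N + e * x) * s.
Proof.
  intros N s e x.
  pose proof (key u m) as K. fold N s in K.
  assert (HN : 0 <= N) by apply pos_INR.
  assert (Hx : x * x = N) by (apply sqrt_sqrt; lra).
  assert (Hx0 : 0 <= x) by apply sqrt_pos.
  assert (He : e * e = u ^ 2 / 4).
  { unfold e. replace (u ^ 2) with (Rabs u ^ 2) by apply pow2_abs. field. }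
  assert (He0 : 0 <= e) by (unfold e; pose proof (Rabs_pos u); lra).
  assert (Hs : 0 <= s) by (unfold s; pose proof (ha_nonneg u m); pose proof (ha_nonneg u (S m)); lra).
  assert (B : (N * s - HA u m) ^ 2 <= (e * x * s) ^ 2).
  { replace ((e * x * s) ^ 2) with ((e * e) * (x * x) * s ^ 2) by ring.
    rewrite He, Hx. lra. }
  apply sq_bound in B.
  - lra.
  - apply Rmult_le_pos; [apply Rmult_le_pos|]; lra.
Qed.

Lemma large_sqrt b : exists M0 : nat, forall m, (M0 <= m)%nat -> b <= sqrt (INR (S (S m))).
Proof.
  destruct (INR_archimed 1 (b ^ 2)) as [n Hn]; [lra|].
  exists n. intros m Hm.
  assert (b ^ 2 <= INR (S (S m))).
  { apply le_INR in Hm. rewrite !S_INR. lra. }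
  apply Rle_trans with (Rabs b); [apply Rle_abs|].
  rewrite <- sqrt_Rsqr_abs. apply sqrt_le_1_alt. unfold Rsqr. lra.
Qed.

Lemma comp_lower e x y : 0 <= e -> 2 * e + 1 <= x -> y * y = x * x + 1 -> x <= y ->
  (y * y + (4 * e + 1) * y) * (x * x + e * x) <= (x * x + (4 * e + 1) * x) * (x * x + e * x + 1).
Proof.
  intros He Hx Hy Hxy.
  set (K := 4 * e + 1).
  set (w := (y - x) * x).
  assert (HK : K = 4 * e + 1) by reflexivity.
  assert (Hwd : w = (y - x) * x) by reflexivity.
  clearbody K w.
  assert (Hw : w <= 1 / 2).
  { rewrite Hwd. assert ((y - x) * (y + x) = 1) by nra. nra. }
  assert (Hw0 : 0 <= w) by (rewrite Hwd; nra).
  assert (Id : (x * x + K * x) * (x * x + e * x + 1) - (y * y + K * y) * (x * x + e * x)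
               = - K * w * (x + e) - e * x + K * x).
  { rewrite Hwd. rewrite Hy. ring. }
  assert (0 <= (1/2 - w) * K * (x + e)).
  { apply Rmult_le_pos; [apply Rmult_le_pos|]; rewrite ?HK; lra. }
  assert (x * (2 * e + 1) >= K * e) by (rewrite HK; nra).
  nra.
Qed.

Lemma comp_upper e x y : 0 <= e -> 2 * e + 3 <= x -> y * y = x * x + 1 -> x <= y ->
  (x * x - (2 * e + 2) * x) * (x * x - e * x) <= (y * y - (2 * e + 2) * y) * (x * x - e * x - 1).
Proof.
  intros He Hx Hy Hxy.
  set (K := 2 * e + 2).
  set (w := (y - x) * x).
  assert (HK : K = 2 * e + 2) by reflexivity.
  assert (Hwd : w = (y - x) * x) by reflexivity.
  clearbody K w.
  assert (Hw : w <= 1 / 2).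
  { rewrite Hwd. assert ((y - x) * (y + x) = 1) by nra. nra. }
  assert (Hw0 : 0 <= w) by (rewrite Hwd; nra).
  assert (Id : (y * y - K * y) * (x * x - e * x - 1) - (x * x - K * x) * (x * x - e * x)
               = (K - e) * x - 1 - K * (w * x - (y - x) * (e * x + 1))).
  { rewrite Hwd. rewrite Hy. ring. }
  assert (0 <= K * (y - x) * (e * x + 1)).
  { apply Rmult_le_pos; [apply Rmult_le_pos|]; rewrite ?HK; nra. }
  assert (0 <= K * (1/2 - w) * x).
  { apply Rmult_le_pos; [apply Rmult_le_pos|]; rewrite ?HK; lra. }
  nra.
Qed.

Definition Q u m := HA u (S m) * HA u m.
Definition NN m := INR (S (S m)).
Definition xx m := sqrt (NN m).

Lemma NN_S m : NN (S m) = NN m + 1.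
Proof. unfold NN. rewrite (S_INR (S (S m))). reflexivity. Qed.

Lemma NN_pos m : 2 <= NN m.
Proof. unfold NN. rewrite !S_INR. pose proof (pos_INR m). lra. Qed.

Lemma xx_sq m : xx m * xx m = NN m.
Proof. unfold xx. apply sqrt_sqrt. pose proof (NN_pos m). lra. Qed.

Lemma xx_mono m : xx m <= xx (S m).
Proof. unfold xx. apply sqrt_le_1_alt. rewrite NN_S. lra. Qed.

Lemma xx_pos m : 0 <= xx m.
Proof. apply sqrt_pos. Qed.

Lemma Q_S u m : Q u (S m) = Q u m + HA u (S m) * (ha u (S m) + ha u (S (S m))).
Proof. unfold Q. rewrite (HA_S u (S m)), (HA_S u m). ring. Qed.

Lemma step_lower u m : let e := Rabs u / 2 in let D := NN m + e * xx m in
  (D + 1) * Q u m <= D * Q u (S m).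
Proof.
  intros e D.
  pose proof (key_bounds u (S m)) as [_ KB]. fold e in KB.
  change (INR (S (S m))) with (NN m) in KB. fold (xx m) in KB. fold D in KB.
  set (s := ha u (S m) + ha u (S (S m))) in *.
  rewrite Q_S. fold s. unfold Q.
  pose proof (HA_ge1 u m). pose proof (HA_mono u m).
  set (A0 := HA u m) in *. set (A1 := HA u (S m)) in *.
  assert (A1 * A0 <= A1 * A1) by nra.
  assert (A1 * A1 <= A1 * (D * s)) by nra.
  nra.
Qed.

Lemma step_upper u m : let e := Rabs u / 2 in let D := NN m - e * xx m in
  (D - 1) * Q u (S m) <= D * Q u m.
Proof.
  intros e D.
  pose proof (key_bounds u (S m)) as [KB _]. fold e in KB.
  change (INR (S (S m))) with (NN m) in KB. fold (xx m) in KB. fold D in KB.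
  set (s := ha u (S m) + ha u (S (S m))) in *.
  rewrite Q_S. fold s. unfold Q.
  pose proof (HA_ge1 u m). pose proof (HA_mono u m).
  pose proof (HA_mono u (S m)).
  assert (HS : HA u (S (S m)) = HA u m + s) by (unfold s; rewrite !HA_S; ring).
  rewrite HS in *.
  set (A0 := HA u m) in *. set (A1 := HA u (S m)) in *.
  assert (A1 * (D * s) <= A1 * A1) by nra.
  assert (A1 * A1 <= A1 * (A0 + s)) by nra.
  nra.
Qed.

Lemma Q_pos u m : 1 <= Q u m.
Proof. unfold Q. pose proof (HA_ge1 u m). pose proof (HA_ge1 u (S m)). nra. Qed.

Lemma lower_growth u : exists c M0, 0 < c /\ forall m, (M0 <= m)%nat -> c * NN m <= Q u m.
Proof.
  set (e := Rabs u / 2).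
  assert (He : 0 <= e) by (unfold e; pose proof (Rabs_pos u); lra).
  set (K := 4 * e + 1).
  set (g := fun m => NN m + K * xx m).
  assert (Hg : forall m, 0 < g m).
  { intro m. unfold g. pose proof (NN_pos m). pose proof (xx_pos m). unfold K. nra. }
  destruct (large_sqrt (2 * e + 1)) as [M0 HM0].
  exists (Q u M0 / g M0), M0.
  assert (Hc : 0 < Q u M0 / g M0).
  { apply Rdiv_lt_0_compat; [pose proof (Q_pos u M0); lra | apply Hg]. }
  split; [exact Hc|].
  set (c := Q u M0 / g M0) in *.
  assert (Ind : forall k, c * g (M0 + k)%nat <= Q u (M0 + k)%nat).
  { induction k.
    - rewrite Nat.add_0_r. unfold c. right. field. apply Rgt_not_eq, Hg.
    - rewrite Nat.add_succ_r. set (m := (M0 + k)%nat) in *.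
      pose proof (step_lower u m) as SL. cbv zeta in SL.
      set (D := NN m + e * xx m) in *.
      assert (HD : 0 < D) by (unfold D; pose proof (NN_pos m); pose proof (xx_pos m); nra).
      assert (Cm : g (S m) * D <= g m * (D + 1)).
      { unfold g, D. rewrite <- (xx_sq m), <- (xx_sq (S m)).
        apply comp_lower; auto.
        - apply HM0. unfold m. lia.
        - rewrite !xx_sq. apply NN_S.
        - apply xx_mono. }
      apply (Rmult_le_reg_r D); [exact HD|].
      assert (c * g m * (D + 1) <= Q u m * (D + 1)) by (apply Rmult_le_compat_r; lra).
      assert (c * (g (S m) * D) <= c * (g m * (D + 1))) by (apply Rmult_le_compat_l; lra).
      assert (SL' : (D + 1) * Q u m <= D * Q u (S m)) by exact SL.
      clear - H H0 SL' HD Hc. clearbody D c. lra. }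
  intros m Hm.
  replace m with (M0 + (m - M0))%nat by lia.
  eapply Rle_trans; [| apply Ind].
  apply Rmult_le_compat_l; [lra|]. unfold g. pose proof (xx_pos (M0 + (m - M0))). unfold K. nra.
Qed.

Lemma upper_growth u : exists C M0, forall m, (M0 <= m)%nat -> Q u m <= C * NN m.
Proof.
  set (e := Rabs u / 2).
  assert (He : 0 <= e) by (unfold e; pose proof (Rabs_pos u); lra).
  set (K := 2 * e + 2).
  set (g := fun m => NN m - K * xx m).
  destruct (large_sqrt (2 * e + 3)) as [M0 HM0'].
  assert (HM0 : forall m, (M0 <= m)%nat -> 2 * e + 3 <= xx m) by exact HM0'.
  clear HM0'.
  assert (Hg : forall m, (M0 <= m)%nat -> 0 < g m).
  { intros m Hm. unfold g. rewrite <- xx_sq. pose proof (HM0 m Hm). unfold K. nra. }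
  exists (Q u M0 / g M0), M0.
  assert (Hc : 0 < Q u M0 / g M0).
  { apply Rdiv_lt_0_compat; [pose proof (Q_pos u M0); lra | apply Hg; lia]. }
  set (c := Q u M0 / g M0) in *.
  assert (Ind : forall k, Q u (M0 + k)%nat <= c * g (M0 + k)%nat).
  { induction k.
    - rewrite Nat.add_0_r. unfold c. right. field. apply Rgt_not_eq, Hg; lia.
    - rewrite Nat.add_succ_r. set (m := (M0 + k)%nat) in *.
      pose proof (step_upper u m) as SU. cbv zeta in SU.
      set (D := NN m - e * xx m) in *.
      assert (Hx := HM0 m ltac:(unfold m; lia)).
      assert (HD : 0 < D - 1) by (unfold D; rewrite <- xx_sq; nra).
      assert (Cm : g m * D <= g (S m) * (D - 1)).
      { unfold g, D. rewrite <- (xx_sq m), <- (xx_sq (S m)).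
        apply comp_upper; auto.
        - rewrite !xx_sq. apply NN_S.
        - apply xx_mono. }
      apply (Rmult_le_reg_r (D - 1)); [exact HD|].
      assert (Q u m * D <= c * g m * D) by (apply Rmult_le_compat_r; lra).
      assert (c * (g m * D) <= c * (g (S m) * (D - 1))) by (apply Rmult_le_compat_l; lra).
      assert (SU' : (D - 1) * Q u (S m) <= D * Q u m) by exact SU.
      clear - H H0 SU' HD Hc. clearbody D c. lra. }
  intros m Hm.
  replace m with (M0 + (m - M0))%nat by lia.
  eapply Rle_trans; [apply Ind|].
  apply Rmult_le_compat_l; [lra|]. unfold g. pose proof (xx_pos (M0 + (m - M0))). unfold K. nra.
Qed.

Lemma ln_le_sub1 y : 0 < y -> ln y <= y - 1.
Proof. intro H. pose proof (exp_ineq1_le (ln y)). rewrite exp_ln in H0; lra. Qed.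

Lemma ln_step1 N : 0 < N -> 1 / (N + 1) <= ln (N + 1) - ln N.
Proof.
  intro H. assert (H1 : 0 < N / (N + 1)) by (apply Rdiv_lt_0_compat; lra).
  pose proof (ln_le_sub1 _ H1).
  unfold Rdiv in H0. rewrite ln_mult, ln_Rinv in H0; try lra; try (apply Rinv_0_lt_compat; lra).
  replace (N * / (N + 1) - 1) with (- (1 / (N + 1))) in H0 by (field; lra). lra.
Qed.

Lemma ln_step2 N : 0 < N -> ln (N + 1) - ln N <= 1 / N.
Proof.
  intro H. assert (H1 : 0 < (N + 1) / N) by (apply Rdiv_lt_0_compat; lra).
  pose proof (ln_le_sub1 _ H1).
  unfold Rdiv in H0. rewrite ln_mult, ln_Rinv in H0; try lra; try (apply Rinv_0_lt_compat; lra).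
  replace ((N + 1) * / N - 1) with (1 / N) in H0 by (field; lra). lra.
Qed.

Lemma tele q N : 0 < q -> 0 < N ->
  q * exp (- (q + 1) * ln (N + 1)) <= exp (- q * ln N) - exp (- q * ln (N + 1)).
Proof.
  intros Hq HN.
  pose proof (ln_step1 N HN) as Hd.
  set (L := ln (N + 1)) in *. set (l := ln N) in *.
  assert (E1 : exp (- q * l) = exp (- q * L) * exp (q * (L - l))) by (rewrite <- exp_plus; f_equal; ring).
  assert (E2 : exp (- (q + 1) * L) = exp (- q * L) * / (N + 1)).
  { replace (- (q + 1) * L) with (- q * L + - L) by ring. rewrite exp_plus, exp_Ropp.
    unfold L. rewrite exp_ln; [reflexivity | lra]. }
  rewrite E1, E2.
  pose proof (exp_ineq1_le (q * (L - l))).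
  pose proof (exp_pos (- q * L)).
  assert (q / (N + 1) <= q * (L - l)).
  { replace (q / (N + 1)) with (q * (1 / (N + 1))) by (field; lra). apply Rmult_le_compat_l; lra. }
  replace (q * (exp (- q * L) * / (N + 1))) with (exp (- q * L) * (q / (N + 1))) by (field; lra).
  assert (exp (- q * L) * (q / (N + 1)) <= exp (- q * L) * (exp (q * (L - l)) - 1)).
  { apply Rmult_le_compat_l; lra. }
  lra.
Qed.

Lemma pos_series_bounded a M : (forall n, 0 <= a n) -> (forall n, sum_f_R0 a n <= M) -> ex_series a.
Proof.
  intros Ha HM. apply ex_series_Reals_1.
  apply growing_cv.
  - intro n. simpl. pose proof (Ha (S n)). lra.
  - exists M. intros x [i ->]. apply HM.
Qed.

Lemma series_partial_bound a : (forall n, 0 <= a n) -> ex_series a -> exists l, forall n, sum_f_R0 a n <= l.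
Proof.
  intros Ha He. destruct (ex_series_Reals_0 a He) as [l Hl].
  exists l. apply growing_ineq; auto.
  intro n. simpl. pose proof (Ha (S n)). lra.
Qed.

Lemma pseries p : 1 < p -> ex_series (fun n => exp (- p * ln (INR (S n)))).
Proof.
  intro Hp. set (q := p - 1).
  assert (Hq : 0 < q) by (unfold q; lra).
  set (f := fun k : nat => exp (- q * ln (INR (S k)))).
  apply pos_series_bounded with (M := 1 + 1 / q).
  - intro n. left. apply exp_pos.
  - assert (forall n, sum_f_R0 (fun n => exp (- p * ln (INR (S n)))) n <= 1 + (1 - f n) / q).
    { induction n.
      - simpl. unfold f. simpl. rewrite ln_1. rewrite !Rmult_0_r, exp_0. unfold Rdiv. lra.
      - rewrite tech5. cbv beta.
        assert (T : q * exp (- (q + 1) * ln (INR (S n) + 1)) <= f n - f (S n)).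
        { unfold f. rewrite (S_INR (S n)). apply tele; auto. apply lt_0_INR. lia. }
        replace (q + 1) with p in T by (unfold q; ring).
        rewrite <- S_INR in T.
        assert (exp (- p * ln (INR (S (S n)))) <= (f n - f (S n)) / q).
        { apply (Rmult_le_reg_l q); auto. replace (q * ((f n - f (S n)) / q)) with (f n - f (S n)) by (field; lra). lra. }
        assert ((1 - f n) / q + (f n - f (S n)) / q = (1 - f (S n)) / q) by (field; lra).
        lra. }
    intro n. eapply Rle_trans; [apply H|].
    assert (0 < f n) by apply exp_pos.
    assert ((1 - f n) / q <= 1 / q).
    { unfold Rdiv. apply Rmult_le_compat_r; [left; apply Rinv_0_lt_compat; lra | lra]. }
    lra.
Qed.

Lemma harm_div c f : 0 < c -> (forall k, 0 <= f k) -> (forall k, c / (INR k + 1) <= f k) -> ~ ex_series f.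
Proof.
  intros Hc Hf Hb He.
  destruct (series_partial_bound f Hf He) as [l Hl].
  assert (G : forall n, c * ln (INR n + 2) <= sum_f_R0 f n).
  { induction n.
    - simpl. pose proof (Hb 0%nat). simpl in H.
      pose proof (ln_le_sub1 2 ltac:(lra)). replace (0 + 2) with 2 by ring.
      replace (c / (0 + 1)) with c in H by field.
      assert (c * ln 2 <= c * 1) by (apply Rmult_le_compat_l; lra). lra.
    - simpl sum_f_R0. pose proof (Hb (S n)).
      pose proof (ln_step2 (INR n + 2) ltac:(pose proof (pos_INR n); lra)).
      rewrite S_INR in H |- *.
      replace (INR n + 1 + 2) with (INR n + 2 + 1) by ring.
      replace (INR n + 1 + 1) with (INR n + 2) in H by ring.
      assert (c * (ln (INR n + 2 + 1) - ln (INR n + 2)) <= c * (1 / (INR n + 2))) by (apply Rmult_le_compat_l; lra).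
      replace (c * (1 / (INR n + 2))) with (c / (INR n + 2)) in H1 by (field; pose proof (pos_INR n); lra).
      lra. }
  destruct (INR_archimed 1 (exp (l / c))) as [n Hn]; [lra|].
  pose proof (G n) as Gn. pose proof (Hl n).
  assert (l / c < ln (INR n + 2)).
  { rewrite <- (ln_exp (l / c)). apply ln_increasing; [apply exp_pos | lra]. }
  assert (c * (l / c) < c * ln (INR n + 2)) by (apply Rmult_lt_compat_l; lra).
  replace (c * (l / c)) with l in H1 by (field; lra). lra.
Qed.

Lemma sq_le a b : 0 <= b -> a * a <= b * b -> a <= b.
Proof. intros Hb H. nra. Qed.

Lemma d_lower u c M0 (Hc : 0 < c) (H : forall m, (M0 <= m)%nat -> c * NN m <= Q u m) m (Hm : (M0 <= m)%nat) :
  sqrt c / ((1 + Rabs u / 2) * NN m) <=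
  ha u (S m) / sqrt (INR (S m)) + ha u (S (S m)) / sqrt (INR (S (S m))).
Proof.
  set (e := Rabs u / 2).
  assert (He : 0 <= e) by (unfold e; pose proof (Rabs_pos u); lra).
  pose proof (key_bounds u (S m)) as [_ KB]. cbv zeta in KB. fold e in KB.
  change (sqrt (INR (S (S m)))) with (xx m) in *.
  change (INR (S (S m))) with (NN m) in *.
  pose proof (xx_sq m) as Hx2. pose proof (NN_pos m). pose proof (xx_pos m).
  set (x := xx m) in *. set (s := ha u (S m) + ha u (S (S m))) in *.
  assert (Hx1 : 1 <= x) by nra.
  set (z := sqrt (INR (S m))).
  assert (Hz : 0 < z) by (apply sqrt_lt_R0, lt_0_INR; lia).
  assert (Hzx : z <= x).
  { unfold z, x, xx. apply sqrt_le_1_alt. unfold NN. rewrite (S_INR (S m)). lra. }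
  pose proof (ha_nonneg u (S m)) as h1. pose proof (ha_nonneg u (S (S m))) as h2.
  assert (Hs : 0 <= s) by (unfold s; lra).
  pose proof (H m Hm) as HQ. unfold Q in HQ.
  pose proof (HA_mono u m). pose proof (HA_ge1 u m).
  assert (Hsc : sqrt c * sqrt c = c) by (apply sqrt_sqrt; lra).
  pose proof (sqrt_pos c).
  assert (L1 : sqrt c * x <= HA u (S m)).
  { apply sq_le; [lra|]. rewrite <- Hx2 in HQ. nra. }
  assert (L2 : sqrt c <= (1 + e) * x * s).
  { rewrite <- Hx2 in KB.
    assert (sqrt c * x <= x * ((x + e) * s)) by lra.
    assert (sqrt c <= (x + e) * s).
    { apply (Rmult_le_reg_l x); lra. }
    assert (0 <= e * (x - 1) * s) by (apply Rmult_le_pos; [apply Rmult_le_pos|]; lra).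
    lra. }
  assert (L3 : s / x <= ha u (S m) / z + ha u (S (S m)) / x).
  { unfold s. unfold Rdiv. rewrite Rmult_plus_distr_r.
    apply Rplus_le_compat_r. apply Rmult_le_compat_l; [lra|].
    apply Rinv_le_contravar; lra. }
  eapply Rle_trans; [|exact L3].
  rewrite <- Hx2.
  apply (Rmult_le_reg_r ((1 + e) * (x * x))); [nra|].
  replace (sqrt c / ((1 + e) * (x * x)) * ((1 + e) * (x * x))) with (sqrt c) by (field; nra).
  replace (s / x * ((1 + e) * (x * x))) with ((1 + e) * x * s) by (field; nra).
  exact L2.
Qed.

Lemma ha_upper u C M0 (H : forall m, (M0 <= m)%nat -> Q u m <= C * NN m) n (Hn : (M0 <= n)%nat)
  (Hx : Rabs u <= sqrt (INR (S n))) :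
  ha u (S n) * sqrt (INR (S n)) <= 2 * sqrt (2 * C).
Proof.
  set (e := Rabs u / 2).
  pose proof (key_bounds u n) as [KB _]. cbv zeta in KB. fold e in KB.
  set (N := INR (S n)) in *. set (x := sqrt N) in *.
  assert (HN : 1 <= N) by (unfold N; rewrite S_INR; pose proof (pos_INR n); lra).
  assert (Hx2 : x * x = N) by (apply sqrt_sqrt; lra).
  assert (Hx0 : 0 <= x) by apply sqrt_pos.
  assert (Hx1 : 1 <= x) by nra.
  pose proof (ha_nonneg u n) as h0. pose proof (ha_nonneg u (S n)) as h1.
  set (s := ha u n + ha u (S n)) in *.
  assert (Hs : 0 <= s) by (unfold s; lra).
  assert (He : e * x <= x * x / 2).
  { assert (Rabs u * x <= x * x) by (apply Rmult_le_compat_r; lra). unfold e. lra. }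
  assert (L1 : N / 2 * s <= HA u n).
  { assert (0 <= (N / 2 - e * x) * s) by (apply Rmult_le_pos; lra). lra. }
  pose proof (H n Hn) as HQ. unfold Q in HQ.
  assert (HNN : NN n = N + 1) by (unfold NN, N; rewrite (S_INR (S n)); reflexivity).
  rewrite HNN in HQ.
  pose proof (HA_mono u n). pose proof (HA_ge1 u n).
  assert (HC : 0 < C) by nra.
  assert (L2 : HA u n * HA u n <= 2 * C * N) by nra.
  assert (Hs2 : sqrt (2 * C) * sqrt (2 * C) = 2 * C) by (apply sqrt_sqrt; lra).
  pose proof (sqrt_pos (2 * C)).
  assert (L3 : HA u n <= sqrt (2 * C) * x).
  { apply sq_le; [apply Rmult_le_pos; lra|]. nra. }
  assert (L4 : x * x / 2 * ha u (S n) <= sqrt (2 * C) * x).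
  { rewrite Hx2. assert (N / 2 * ha u (S n) <= N / 2 * s) by (apply Rmult_le_compat_l; unfold s; lra). lra. }
  apply (Rmult_le_reg_l (x / 2)); [lra|]. nra.
Qed.

Lemma Rpower_pos' x y : 0 < Rpower x y.
Proof. unfold Rpower. apply exp_pos. Qed.

Lemma term_eq u gamma n :
  hermite (S n) u ^ 2 / (INR (Factorial.fact (S n)) * Rpower (INR (S n)) gamma)
  = ha u (S n) / Rpower (INR (S n)) gamma.
Proof.
  unfold ha. pose proof (fact_pos (S n)). pose proof (Rpower_pos' (INR (S n)) gamma).
  field. lra.
Qed.

Lemma normR (x : R) : norm x = Rabs x.
Proof. reflexivity. Qed.

Theorem mainTheorem8 (u gamma : R) :
  ex_series (fun n : nat =>
    (hermite (S n) u) ^ 2 / (INR (Factorial.fact (S n)) * Rpower (INR (S n)) gamma))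
  <-> 1 / 2 < gamma.
Proof.
  set (t := fun n : nat =>
    (hermite (S n) u) ^ 2 / (INR (Factorial.fact (S n)) * Rpower (INR (S n)) gamma)).
  assert (Ht : forall n, t n = ha u (S n) / Rpower (INR (S n)) gamma) by (intro n; apply term_eq).
  assert (Ht0 : forall n, 0 <= t n).
  { intro n. rewrite Ht. apply Rdiv_le_0_compat; [apply ha_nonneg | apply Rpower_pos']. }
  set (e := Rabs u / 2).
  assert (He : 0 <= e) by (unfold e; pose proof (Rabs_pos u); lra).
  split.
  - intro Hex. destruct (Rlt_or_le (1 / 2) gamma) as [Hg | Hg]; [exact Hg | exfalso].
    set (b := fun n => ha u (S n) / sqrt (INR (S n))).
    assert (Hb0 : forall n, 0 <= b n).
    { intro n. unfold b. apply Rdiv_le_0_compat; [apply ha_nonneg|]. apply sqrt_lt_R0, lt_0_INR; lia. }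
    assert (Hb : ex_series b).
    { apply (ex_series_le b t); [|exact Hex].
      intro n. rewrite normR, Rabs_pos_eq by apply Hb0. rewrite Ht. unfold b.
      assert (HN : 1 <= INR (S n)) by (rewrite S_INR; pose proof (pos_INR n); lra).
      assert (Rpower (INR (S n)) gamma <= sqrt (INR (S n))).
      { rewrite <- Rpower_sqrt by lra. apply Rle_Rpower; lra. }
      unfold Rdiv. apply Rmult_le_compat_l; [apply ha_nonneg|].
      apply Rinv_le_contravar; [apply Rpower_pos' | exact H]. }
    destruct (lower_growth u) as [c [M0 [Hc HL]]].
    set (f := fun k => b (M0 + k)%nat + b (S (M0 + k))).
    assert (Hf : ex_series f).
    { assert (ex_series (fun n => b n + b (S n))).
      { apply (ex_series_plus b (fun n => b (S n))); [exact Hb | apply (ex_series_incr_1 b); exact Hb]. }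
      apply (ex_series_incr_n _ M0) in H. exact H. }
    apply (harm_div (sqrt c / ((1 + e) * (INR M0 + 2))) f).
    + apply Rdiv_lt_0_compat; [apply sqrt_lt_R0; lra|]. pose proof (pos_INR M0). nra.
    + intro k. unfold f. pose proof (Hb0 (M0 + k)%nat). pose proof (Hb0 (S (M0 + k))). lra.
    + intro k. unfold f.
      pose proof (d_lower u c M0 Hc HL (M0 + k)%nat ltac:(lia)) as DL.
      eapply Rle_trans; [|exact DL].
      assert (HNN : NN (M0 + k) = INR M0 + INR k + 2) by (unfold NN; rewrite !S_INR, plus_INR; ring).
      rewrite HNN.
      pose proof (pos_INR M0). pose proof (pos_INR k).
      pose proof (sqrt_pos c).
      unfold Rdiv. rewrite Rmult_assoc. apply Rmult_le_compat_l; [lra|].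
      rewrite <- Rinv_mult.
      fold e.
      assert (0 <= (1 + e) * (INR M0 + 1) * INR k) by (apply Rmult_le_pos; [apply Rmult_le_pos|]; lra).
      change (Rabs u * / 2) with e.
      apply Rinv_le_contravar; [nra|].
      nra.
    + exact Hf.
  - intro Hg.
    destruct (upper_growth u) as [C [M0 HU]].
    destruct (large_sqrt (Rabs u)) as [M1 HM1].
    set (M := S (Nat.max M0 M1)).
    set (p := / 2 + gamma).
    assert (Hp : 1 < p) by (unfold p; lra).
    apply (ex_series_incr_n t M).
    apply (@ex_series_le R_AbsRing R_CompleteNormedModule _ (fun k => 2 * sqrt (2 * C) * exp (- p * ln (INR (S (M + k)))))).
    + intro k. rewrite normR, Rabs_pos_eq by apply Ht0. rewrite Ht.
      set (n := (M + k)%nat).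
      assert (Hn1 : (M0 <= n)%nat) by (unfold n, M; lia).
      assert (Hn2 : Rabs u <= sqrt (INR (S n))).
      { replace n with (S (n - 1)) by (unfold n, M; lia). apply HM1. unfold n, M. lia. }
      pose proof (ha_upper u C M0 HU n Hn1 Hn2) as HB.
      set (N := INR (S n)) in *.
      assert (HN : 1 <= N) by (unfold N; rewrite S_INR; pose proof (pos_INR n); lra).
      assert (Hsq : sqrt N = exp (/ 2 * ln N)) by (rewrite <- Rpower_sqrt by lra; reflexivity).
      assert (Hexp : exp (- p * ln N) = / (sqrt N * Rpower N gamma)).
      { rewrite Hsq. unfold Rpower. rewrite <- exp_plus.
        replace (- p * ln N) with (- (/ 2 * ln N + gamma * ln N)) by (unfold p; ring).
        apply exp_Ropp. }
      rewrite Hexp.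
      assert (Hs : 0 < sqrt N) by (apply sqrt_lt_R0; lra).
      pose proof (Rpower_pos' N gamma).
      apply (Rmult_le_reg_r (sqrt N * Rpower N gamma)); [nra|].
      replace (2 * sqrt (2 * C) * / (sqrt N * Rpower N gamma) * (sqrt N * Rpower N gamma))
        with (2 * sqrt (2 * C)) by (field; lra).
      replace (ha u (S n) / Rpower N gamma * (sqrt N * Rpower N gamma))
        with (ha u (S n) * sqrt N) by (field; lra).
      exact HB.
    + apply (ex_series_scal_l (2 * sqrt (2 * C)) (fun k => exp (- p * ln (INR (S (M + k)))))).
      apply (ex_series_incr_n (fun k => exp (- p * ln (INR (S k)))) M).
      apply pseries. exact Hp.
Qed.
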